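(* For every $c>0$ and $\varepsilon>0$ there is $n_0$ such that for all $n>n_0$ the following holds. Let $\ell_1,\ell_2$ be lines in $\mathbb{R}^2$, let $P_1$ be a set of $n$ points on $\ell_1$ and $P_2$ a set of $n^{1/2+\varepsilon}$ points on $\ell_2$. If $|D(P_1,P_2)|<cn$, then $\ell_1$ and $\ell_2$ are parallel or orthogonal.
   Context: For point sets $P,Q\subset\mathbb{R}^2$, $D(P,Q)=\{d(p,q): p\in P,\ q\in Q\}$ denotes the set of Euclidean distances between a point of $P$ and a point of $Q$. *)

(* Defs.v *)
From Stdlib Require Import Reals Lra List.
Import ListNotations.
Open Scope R_scope.

Definition point : Type := (R * R)%type.

Definition dist2 (p q : point) : R :=
  sqrt ((fst p - fst q) ^ 2 + (snd p - snd q) ^ 2).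

(* The line through a with direction d (d <> 0). *)
Definition on_line (a d p : point) : Prop :=
  exists t : R, p = (fst a + t * fst d, snd a + t * snd d).

(* Finite point sets are duplicate-free lists. *)
Definition distset (P Q : list point) : list R :=
  nodup Req_EM_T (flat_map (fun p => map (dist2 p) Q) P).

Definition parallel (d1 d2 : point) : Prop :=
  fst d1 * snd d2 - snd d1 * fst d2 = 0.

Definition orthogonal (d1 d2 : point) : Prop :=
  fst d1 * fst d2 + snd d1 * snd d2 = 0.

(* Main.v *)
Require Import Defs.
From Stdlib Require Import Reals List Lra Lia Bool ZArith.
Import ListNotations.
Open Scope R_scope.

Fixpoint lsum {A} (f : A -> nat) (l : list A) : nat :=
  match l with nil => 0%nat | x :: l' => (f x + lsum f l')%nat end.
Definition ind (b : bool) : nat := if b then 1%nat else 0%nat.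

Lemma lsum_ext {A} (f g : A -> nat) l : (forall x, In x l -> f x = g x) -> lsum f l = lsum g l.
Proof. induction l; simpl; intros H; auto. Qed.
Lemma lsum_le {A} (f g : A -> nat) l : (forall x, In x l -> (f x <= g x)%nat) -> (lsum f l <= lsum g l)%nat.
Proof. induction l; simpl; intros H; auto. specialize (IHl (fun x h => H x (or_intror h))). specialize (H a (or_introl eq_refl)). lia. Qed.
Lemma lsum_app {A} (f : A -> nat) l1 l2 : lsum f (l1 ++ l2) = (lsum f l1 + lsum f l2)%nat.
Proof. induction l1; simpl; auto. rewrite IHl1; lia. Qed.
Lemma lsum_plus {A} (f g : A -> nat) l : lsum (fun x => f x + g x)%nat l = (lsum f l + lsum g l)%nat.
Proof. induction l; simpl; auto. rewrite IHl; lia. Qed.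
Lemma lsum_mulc {A} (c : nat) (f : A -> nat) l : lsum (fun x => c * f x)%nat l = (c * lsum f l)%nat.
Proof. induction l; simpl; auto. rewrite IHl; lia. Qed.
Lemma lsum_const {A} (c : nat) (l : list A) : lsum (fun _ => c) l = (c * length l)%nat.
Proof. induction l; simpl; auto. rewrite IHl; lia. Qed.
Lemma lsum_swap {A B} (f : A -> B -> nat) l1 l2 :
  lsum (fun a => lsum (fun b => f a b) l2) l1 = lsum (fun b => lsum (fun a => f a b) l1) l2.
Proof. induction l1; simpl.
  - induction l2; simpl; auto.
  - rewrite IHl1. rewrite <- lsum_plus. reflexivity. Qed.
Lemma lsum_map {A B} (f : B -> nat) (g : A -> B) l : lsum f (map g l) = lsum (fun x => f (g x)) l.
Proof. induction l; simpl; auto. Qed.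
Lemma lsum_flat_map {A B} (f : B -> nat) (g : A -> list B) l : lsum f (flat_map g l) = lsum (fun x => lsum f (g x)) l.
Proof. induction l; simpl; auto. rewrite lsum_app, IHl; auto. Qed.
Lemma lsum_prod {A B} (f : A * B -> nat) l1 l2 :
  lsum f (list_prod l1 l2) = lsum (fun a => lsum (fun b => f (a, b)) l2) l1.
Proof. induction l1; simpl; auto. rewrite lsum_app, IHl1, lsum_map; auto. Qed.
Lemma lsum_ge_in {A} (f : A -> nat) l y : In y l -> (f y <= lsum f l)%nat.
Proof. induction l; simpl; intros H; [contradiction|]. destruct H as [H|H]; [subst; lia|]. specialize (IHl H); lia. Qed.
Lemma lsum_ind_filter {A} (p : A -> bool) l : lsum (fun x => ind (p x)) l = length (filter p l).
Proof. induction l; simpl; auto. rewrite IHl. destruct (p a); simpl; [change (ind true) with 1%nat|change (ind false) with 0%nat]; lia. Qed.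
Lemma lsum_filter {A} (f : A -> nat) (p : A -> bool) l :
  lsum f (filter p l) = lsum (fun x => ind (p x) * f x)%nat l.
Proof. induction l; simpl; auto. destruct (p a); simpl; rewrite IHl; [change (ind true) with 1%nat|change (ind false) with 0%nat]; lia. Qed.
Lemma lsum_zero {A} (f : A -> nat) l : (forall x, In x l -> f x = 0%nat) -> lsum f l = 0%nat.
Proof. intros H. rewrite (lsum_ext f (fun _ => 0%nat)); auto. rewrite lsum_const; lia. Qed.

Lemma NoDup_prod {A B} (l1 : list A) (l2 : list B) : NoDup l1 -> NoDup l2 -> NoDup (list_prod l1 l2).
Proof.
  induction 1 as [|a l1 Ha Hl1 IH]; simpl; intros H2; [constructor|].
  apply NoDup_app; auto.
  - apply NoDup_map_NoDup_ForallPairs; auto. intros x y _ _ E; injection E; auto.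
  - intros [x y] Hm Hm'. apply in_map_iff in Hm as [b [Eb _]]. injection Eb as <- <-.
    apply in_prod_iff in Hm' as [Hm' _]. contradiction.
Qed.

Lemma count_le2 {A} (p : A -> bool) l : NoDup l ->
  (forall a b c, In a l -> In b l -> In c l -> p a = true -> p b = true -> p c = true ->
     a <> b -> a <> c -> b <> c -> False) ->
  (lsum (fun x => ind (p x)) l <= 2)%nat.
Proof.
  intros Hn H. rewrite lsum_ind_filter.
  assert (Hf : NoDup (filter p l)) by (apply NoDup_filter; auto).
  destruct (filter p l) as [|a [|b [|c r]]] eqn:E; simpl; try lia.
  exfalso. assert (Ha : In a (filter p l)) by (rewrite E; simpl; auto).
  assert (Hb : In b (filter p l)) by (rewrite E; simpl; auto).
  assert (Hc : In c (filter p l)) by (rewrite E; simpl; auto).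
  apply filter_In in Ha, Hb, Hc.
  inversion Hf; subst. inversion H3; subst.
  apply (H a b c); try tauto.
  - intro; subst; apply H2; simpl; auto.
  - intro; subst; apply H2; simpl; auto.
  - intro; subst; apply H4; simpl; auto.
Qed.
Lemma lsum_swap4 {A B} (f : A -> A -> B -> B -> nat) l1 l2 :
  lsum (fun a => lsum (fun a' => lsum (fun b => lsum (fun b' => f a a' b b') l2) l2) l1) l1 =
  lsum (fun b => lsum (fun b' => lsum (fun a => lsum (fun a' => f a a' b b') l1) l1) l2) l2.
Proof.
  transitivity (lsum (fun a => lsum (fun b => lsum (fun a' => lsum (fun b' => f a a' b b') l2) l1) l2) l1).
  { apply lsum_ext; intros; apply lsum_swap. }
  rewrite lsum_swap.
  transitivity (lsum (fun b => lsum (fun a => lsum (fun b' => lsum (fun a' => f a a' b b') l1) l2) l1) l2).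
  { apply lsum_ext; intros; apply lsum_ext; intros; apply lsum_swap. }
  apply lsum_ext; intros; apply lsum_swap.
Qed.

Definition sb {P : Prop} (d : {P}+{~P}) : bool := if d then true else false.
Lemma sb_true {P} (d : {P}+{~P}) : sb d = true <-> P.
Proof. unfold sb; destruct d; split; intros; auto; try discriminate; contradiction. Qed.


Lemma key_len {P K} (Pdec : forall x y : P, {x=y}+{x<>y}) (Kdec : forall x y : K, {x=y}+{x<>y})
  (k : P -> K) (G : list P) : NoDup G ->
  (length G <= length (nodup Kdec (map k G)) +
    lsum (fun x => lsum (fun y => ind (negb (sb (Pdec x y)) && sb (Kdec (k x) (k y)))) G) G)%nat.
Proof.
  induction 1 as [|x G Hx HG IH]; simpl; [lia|].
  set (g := fun x0 y => ind (negb (sb (Pdec x0 y)) && sb (Kdec (k x0) (k y)))).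
  fold g in IH.
  assert (E: (lsum (fun x0 => g x0 x + lsum (g x0) G) G >= lsum (fun x0 => lsum (g x0) G) G)%nat).
  { apply lsum_le. intros; lia. }
  destruct (in_dec Kdec (k x) (map k G)) as [Hi|Hi].
  - apply in_map_iff in Hi as [y [Ey Hy]].
    assert (g x y = 1%nat).
    { unfold g. destruct (Pdec x y); [subst; contradiction|]. simpl.
      destruct (Kdec (k x) (k y)); simpl; auto. congruence. }
    pose proof (lsum_ge_in (g x) G y Hy). unfold g at 1 in E. unfold g in *. simpl. lia.
  - simpl. unfold g in *. lia.
Qed.

Lemma key_bound {P K} (Pdec : forall x y : P, {x=y}+{x<>y}) (Kdec : forall x y : K, {x=y}+{x<>y})
  (k : P -> K) (G : list P) (Kall : list K) : NoDup G -> (forall x, In x G -> In (k x) Kall) ->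
  (length G <= length Kall +
    lsum (fun x => lsum (fun y => ind (negb (sb (Pdec x y)) && sb (Kdec (k x) (k y)))) G) G)%nat.
Proof.
  intros HG HK. pose proof (key_len Pdec Kdec k G HG).
  assert (length (nodup Kdec (map k G)) <= length Kall)%nat.
  { apply NoDup_incl_length. apply NoDup_nodup. intros z Hz. apply nodup_In in Hz.
    apply in_map_iff in Hz as [x [<- Hx]]. auto. }
  lia.
Qed.

Lemma amgm2 (a b : nat) : (2*a*b <= a*a + b*b)%nat.
Proof. destruct (Nat.le_ge_cases a b) as [H|H]; apply Nat.le_exists_sub in H as [d [-> _]]; nia. Qed.
Lemma cs_aux {A} (g : A -> nat) l a :
  (2 * a * lsum g l <= length l * (a * a) + lsum (fun x => g x * g x) l)%nat.
Proof. induction l; simpl; [lia|]. pose proof (amgm2 a (g a0)). nia. Qed.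
Lemma cs_nat {A} (g : A -> nat) l :
  (lsum g l * lsum g l <= length l * lsum (fun x => g x * g x) l)%nat.
Proof. induction l; simpl; [lia|]. pose proof (cs_aux g l (g a)). nia. Qed.

Definition Reqb (x y : R) : bool := sb (Req_EM_T x y).
Definition cnt (u : R) (L : list R) : nat := lsum (fun y => ind (Reqb u y)) L.

Lemma sum_single_out (h : R -> nat) U y : ~ In y U -> lsum (fun u => ind (Reqb u y) * h u)%nat U = 0%nat.
Proof. intros H. apply lsum_zero. intros x Hx. unfold Reqb, sb. destruct (Req_EM_T x y); simpl; subst; [contradiction|lia]. Qed.
Lemma sum_single (h : R -> nat) U y : NoDup U -> In y U -> lsum (fun u => ind (Reqb u y) * h u)%nat U = h y.
Proof.
  induction 1 as [|a U Ha HU IH]; simpl; [contradiction|]. intros [<-|Hy].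
  - rewrite sum_single_out; auto. unfold Reqb, sb. destruct (Req_EM_T a a); [simpl; lia|congruence].
  - rewrite IH; auto. unfold Reqb, sb. destruct (Req_EM_T a y); [subst; contradiction|simpl; lia].
Qed.

Lemma group_sum (h : R -> nat) L :
  lsum h L = lsum (fun u => cnt u L * h u)%nat (nodup Req_EM_T L).
Proof.
  transitivity (lsum (fun y => lsum (fun u => ind (Reqb u y) * h u)%nat (nodup Req_EM_T L)) L).
  - apply lsum_ext. intros y Hy. rewrite sum_single; auto. apply NoDup_nodup. apply nodup_In; auto.
  - rewrite lsum_swap. apply lsum_ext. intros u _. unfold cnt. rewrite Nat.mul_comm, <- lsum_mulc.
    apply lsum_ext; intros; lia.
Qed.

Lemma cs_distinct (L : list R) :
  (length L * length L <= length (nodup Req_EM_T L) * lsum (fun y => cnt y L) L)%nat.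
Proof.
  assert (E1 : length L = lsum (fun u => cnt u L) (nodup Req_EM_T L)).
  { rewrite <- (Nat.mul_1_l (length L)) at 1. rewrite <- lsum_const, group_sum. apply lsum_ext; intros; lia. }
  rewrite (group_sum (fun y => cnt y L)). rewrite E1. apply cs_nat.
Qed.

Lemma filter_len_mono {A} (f g : A -> bool) l : (forall x, In x l -> f x = true -> g x = true) ->
  (length (filter f l) <= length (filter g l))%nat.
Proof.
  induction l; simpl; intros H; auto.
  assert (IH := IHl (fun x h => H x (or_intror h))).
  destruct (f a) eqn:Ef; [rewrite (H a (or_introl eq_refl) Ef); simpl; lia|].
  destruct (g a); simpl; lia.
Qed.
Lemma filter_len_strict {A} (f g : A -> bool) l y : (forall x, In x l -> f x = true -> g x = true) ->
  In y l -> g y = true -> f y = false ->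
  (length (filter f l) < length (filter g l))%nat.
Proof.
  induction l; simpl; intros H Hy Hg Hf; [contradiction|].
  destruct Hy as [<-|Hy].
  - rewrite Hf, Hg. simpl. pose proof (filter_len_mono f g l (fun x h => H x (or_intror h))). lia.
  - assert (IH := IHl (fun x h => H x (or_intror h)) Hy Hg Hf).
    destruct (f a) eqn:Ef; [rewrite (H a (or_introl eq_refl) Ef); simpl; lia|].
    destruct (g a); simpl; lia.
Qed.

Definition Rltb (x y : R) : bool := sb (Rlt_dec x y).
Definition rank (S : list R) (x : R) : nat := length (filter (fun y => Rltb y x) S).
Definition blk (S : list R) (R0 : nat) (x : R) : nat := (rank S x / R0)%nat.

Lemma rank_mono S x y : x <= y -> (rank S x <= rank S y)%nat.
Proof. intros H. apply filter_len_mono. intros z _. unfold Rltb. rewrite !sb_true. lra. Qed.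
Lemma rank_strict S x y : In x S -> x < y -> (rank S x < rank S y)%nat.
Proof. intros Hx H. apply (filter_len_strict _ _ _ x); auto.
  - intros z _. unfold Rltb. rewrite !sb_true. lra.
  - unfold Rltb. apply sb_true; auto.
  - unfold Rltb, sb. destruct (Rlt_dec x x); auto. lra. Qed.
Lemma rank_lt S x : In x S -> (rank S x < length S)%nat.
Proof. intros Hx. unfold rank. rewrite <- (filter_true S) at 2.
  apply (filter_len_strict _ _ _ x); auto. unfold Rltb, sb. destruct (Rlt_dec x x); auto. lra. Qed.
Lemma blk_mono S R0 x y : x <= y -> (blk S R0 x <= blk S R0 y)%nat.
Proof. intros H. unfold blk. apply Nat.Div0.div_le_mono. apply rank_mono; auto. Qed.
Lemma blk_lt S R0 x : (0 < R0)%nat -> In x S -> (blk S R0 x < length S / R0 + 1)%nat.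
Proof. intros HR Hx. unfold blk. pose proof (rank_lt S x Hx).
  assert (rank S x / R0 <= length S / R0)%nat by (apply Nat.Div0.div_le_mono; lia). lia. Qed.

Lemma blk_count S R0 b : NoDup S -> (0 < R0)%nat ->
  (lsum (fun y => ind (Nat.eqb (blk S R0 y) b)) S <= R0)%nat.
Proof.
  intros HS HR. rewrite lsum_ind_filter.
  rewrite <- (length_map (rank S)).
  transitivity (length (seq (b * R0) R0)); [|rewrite length_seq; lia].
  apply NoDup_incl_length.
  - apply NoDup_map_NoDup_ForallPairs; [|apply NoDup_filter; auto].
    intros x y Hx Hy E. apply filter_In in Hx as [Hx _]. apply filter_In in Hy as [Hy _].
    destruct (Rtotal_order x y) as [H|[H|H]]; auto.
    + pose proof (rank_strict S x y Hx H); lia.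
    + pose proof (rank_strict S y x Hy H); lia.
  - intros z Hz. apply in_map_iff in Hz as [y [<- Hy]]. apply filter_In in Hy as [_ Hb].
    apply Nat.eqb_eq in Hb. unfold blk in Hb. apply in_seq.
    pose proof (Nat.div_mod_eq (rank S y) R0). pose proof (Nat.mod_upper_bound (rank S y) R0 ltac:(lia)).
    rewrite Hb in *. nia.
Qed.

Definition Fq (A B C s t : R) : R := A*s^2 - 2*C*s*t + B*t^2.

Lemma three_roots a b c x y z : a <> 0 -> a*x^2 + b*x + c = 0 -> a*y^2 + b*y + c = 0 ->
  a*z^2 + b*z + c = 0 -> x <> y -> x <> z -> y <> z -> False.
Proof.
  intros Ha Hx Hy Hz Hxy Hxz Hyz.
  assert (E1 : (x - y) * (a*(x+y) + b) = 0) by nra.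
  assert (E2 : (x - z) * (a*(x+z) + b) = 0) by nra.
  apply Rmult_integral in E1 as [E1|E1]; [lra|].
  apply Rmult_integral in E2 as [E2|E2]; [lra|].
  assert (a * (y - z) = 0) by lra.
  apply Rmult_integral in H as [H|H]; lra.
Qed.

Lemma lin_prop e e' d d' P Q : e*d = e'*d' -> d*P = d'*Q -> (d <> 0 \/ d' <> 0) -> e'*P = e*Q.
Proof.
  intros H1 H2 H3.
  assert (E1 : (e'*P - e*Q) * d = 0).
  { replace ((e'*P - e*Q) * d) with (e' * (d*P) - Q * (e*d)) by ring. rewrite H2, H1. ring. }
  assert (E2 : (e'*P - e*Q) * d' = 0).
  { replace ((e'*P - e*Q) * d') with (P * (e'*d') - e * (d'*Q)) by ring. rewrite <- H1, <- H2. ring. }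
  destruct H3 as [H3|H3].
  - apply Rmult_integral in E1 as [E1|E1]; lra.
  - apply Rmult_integral in E2 as [E2|E2]; lra.
Qed.

Lemma pair_neq (a b c d : R) : (a, b) <> (c, d) -> a - c <> 0 \/ b - d <> 0.
Proof. intros H. destruct (Req_EM_T a c), (Req_EM_T b d); subst; [exfalso; auto| |left|left]; lra. Qed.

Lemma two_curves_alg A B C x x' y y' t1 t1' t2 t2' t3 t3' :
  0 < A -> 0 < B -> C <> 0 -> 0 < A*B - C^2 ->
  (x, x') <> (y, y') ->
  Fq A B C x t1 = Fq A B C x' t1' -> Fq A B C y t1 = Fq A B C y' t1' ->
  Fq A B C x t2 = Fq A B C x' t2' -> Fq A B C y t2 = Fq A B C y' t2' ->
  Fq A B C x t3 = Fq A B C x' t3' -> Fq A B C y t3 = Fq A B C y' t3' ->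
  t1' * t1' <> t1 * t1 ->
  (t1, t1') <> (t2, t2') -> (t1, t1') <> (t3, t3') -> (t2, t2') <> (t3, t3') -> False.
Proof.
  intros HA HB HC HD Hp X1 Y1 X2 Y2 X3 Y3 Nd N12 N13 N23.
  unfold Fq in *.
  set (e := x - y). set (e' := x' - y').
  destruct (Req_EM_T (e^2) (e'^2)) as [Ee|Ee].
  - assert (Hs : e' = e \/ e' = - e).
    { assert ((e' - e) * (e' + e) = 0) by nra. apply Rmult_integral in H as [H|H]; lra. }
    assert (He : e <> 0).
    { intros H0. apply Hp. assert (e' = 0) by (destruct Hs; lra). unfold e, e' in *.
      f_equal; lra. }
    set (X := A*x - C*t1). set (Y := A*x' - C*t1'). set (Xb := A*y - C*t1). set (Yb := A*y' - C*t1').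
    assert (K1 : X^2 - Y^2 = (A*B - C^2)*(t1'^2 - t1^2)).
    { unfold X, Y. replace ((A * B - C ^ 2) * (t1' ^ 2 - t1 ^ 2)) with
        (A * (A * x' ^ 2 - 2 * C * x' * t1' + B * t1' ^ 2) - A*(A * x' ^ 2) + 2*A*C*x'*t1' - A*B*t1^2 - C^2*t1'^2 + C^2*t1^2) by ring.
      rewrite <- X1. ring. }
    assert (K2 : Xb^2 - Yb^2 = (A*B - C^2)*(t1'^2 - t1^2)).
    { unfold Xb, Yb. replace ((A * B - C ^ 2) * (t1' ^ 2 - t1 ^ 2)) with
        (A * (A * y' ^ 2 - 2 * C * y' * t1' + B * t1' ^ 2) - A*(A * y' ^ 2) + 2*A*C*y'*t1' - A*B*t1^2 - C^2*t1'^2 + C^2*t1^2) by ring.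
      rewrite <- Y1. ring. }
    assert (DX : X - Xb = A * e) by (unfold X, Xb, e; ring).
    assert (DY : Y - Yb = A * e') by (unfold Y, Yb, e'; ring).
    assert (Hq : X^2 = Y^2).
    { destruct Hs as [Hs|Hs]; rewrite Hs in DY.
      - assert (E : (X - Xb) * (X + Xb) = (Y - Yb) * (Y + Yb)) by nra.
        rewrite DX, DY in E. assert (A * e <> 0) by (apply Rmult_integral_contrapositive; split; lra).
        assert (X + Xb = Y + Yb) by (apply (Rmult_eq_reg_l (A*e)); auto).
        assert (X = Y) by lra. rewrite H1; auto.
      - assert (E : (X - Xb) * (X + Xb) = (Y - Yb) * (Y + Yb)) by nra.
        rewrite DX, DY in E. assert (A * e <> 0) by (apply Rmult_integral_contrapositive; split; lra).
        assert (X + Xb = - (Y + Yb)) by (apply (Rmult_eq_reg_l (A*e)); auto; lra).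
        assert (X = - Y) by lra. rewrite H1; ring. }
    assert ((A*B - C^2) * (t1'^2 - t1^2) = 0) by lra.
    apply Rmult_integral in H as [H|H]; [lra|]. apply Nd. nra.
  - assert (L : forall ti ti' tj tj',
      A * x ^ 2 - 2 * C * x * ti + B * ti ^ 2 = A * x' ^ 2 - 2 * C * x' * ti' + B * ti' ^ 2 ->
      A * y ^ 2 - 2 * C * y * ti + B * ti ^ 2 = A * y' ^ 2 - 2 * C * y' * ti' + B * ti' ^ 2 ->
      A * x ^ 2 - 2 * C * x * tj + B * tj ^ 2 = A * x' ^ 2 - 2 * C * x' * tj' + B * tj' ^ 2 ->
      A * y ^ 2 - 2 * C * y * tj + B * tj ^ 2 = A * y' ^ 2 - 2 * C * y' * tj' + B * tj' ^ 2 ->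
      e * (ti - tj) = e' * (ti' - tj') /\
      (ti - tj) * (B*(ti+tj) - 2*C*x) = (ti' - tj') * (B*(ti'+tj') - 2*C*x')).
    { intros ti ti' tj tj' a1 a2 a3 a4. split.
      - assert (C * (e * (ti - tj) - e' * (ti' - tj')) = 0).
        { unfold e, e'. nra. }
        apply Rmult_integral in H as [H|H]; lra.
      - nra. }
    destruct (L t1 t1' t2 t2' X1 Y1 X2 Y2) as [L1 L2].
    destruct (L t1 t1' t3 t3' X1 Y1 X3 Y3) as [L3 L4].
    destruct (L t2 t2' t3 t3' X2 Y2 X3 Y3) as [L5 L6].
    pose proof (lin_prop _ _ _ _ _ _ L1 L2 (pair_neq _ _ _ _ N12)) as M1.
    pose proof (lin_prop _ _ _ _ _ _ L3 L4 (pair_neq _ _ _ _ N13)) as M2.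
    assert (M : B * (e' * (t2 - t3) - e * (t2' - t3')) = 0) by nra.
    apply Rmult_integral in M as [M|M]; [lra|].
    assert (D1 : (t2 - t3) * (e'^2 - e^2) = 0).
    { replace ((t2 - t3) * (e'^2 - e^2)) with (e'*(e'*(t2-t3) - e*(t2'-t3')) + e*(e'*(t2'-t3') - e*(t2-t3))) by ring.
      rewrite M, L5. ring. }
    assert (D2 : (t2' - t3') * (e'^2 - e^2) = 0).
    { replace ((t2' - t3') * (e'^2 - e^2)) with (e'*(e'*(t2'-t3') - e*(t2-t3)) - e*(e*(t2'-t3') - e'*(t2-t3))) by ring.
      rewrite <- L5. replace (e * (t2' - t3') - e' * (t2 - t3)) with (-(e' * (t2 - t3) - e * (t2' - t3'))) by ring.
      rewrite M. ring. }
    apply Rmult_integral in D1 as [D1|D1]; [|lra].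
    apply Rmult_integral in D2 as [D2|D2]; [|lra].
    apply N23. f_equal; lra.
Qed.

Lemma hyp_mono X Y Xb Yb : X^2 - Y^2 = Xb^2 - Yb^2 -> X <= Xb ->
 (0 <= X <-> 0 <= Xb) -> (0 <= Y <-> 0 <= Yb) ->
 ((0 <= X <-> 0 <= Y) -> Y <= Yb) /\ (~(0 <= X <-> 0 <= Y) -> Yb <= Y).
Proof.
  intros E H HX HY.
  destruct (Rle_dec 0 X) as [h1|h1]; destruct (Rle_dec 0 Y) as [h2|h2].
  - assert (0 <= Xb) by tauto. assert (0 <= Yb) by tauto.
    split; [intros _; nra|intros Hn; exfalso; tauto].
  - assert (0 <= Xb) by tauto. assert (~ 0 <= Yb) by tauto.
    split; [intros Hn; exfalso; tauto|intros _; nra].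
  - assert (~0 <= Xb) by tauto. assert (0 <= Yb) by tauto.
    split; [intros Hn; exfalso; tauto|intros _; nra].
  - assert (~0 <= Xb) by tauto. assert (~0 <= Yb) by tauto.
    split; [intros _; nra|intros Hn; exfalso; tauto].
Qed.

Definition pdec : forall p q : R * R, {p = q} + {p <> q}.
Proof. intros [a b] [c d]. destruct (Req_EM_T a c), (Req_EM_T b d); subst; auto;
  right; intros E; injection E; auto. Qed.
Definition kdec : forall p q : (nat * nat) * nat, {p = q} + {p <> q}.
Proof. decide equality; [apply Nat.eq_dec|decide equality; apply Nat.eq_dec]. Qed.


Section Core.
Variables A B C : R.
Hypothesis HA : 0 < A.
Hypothesis HB : 0 < B.
Hypothesis HC : C <> 0.
Hypothesis HD : 0 < A*B - C^2.
Variable S : list R.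
Hypothesis HS : NoDup S.
Variable R0 : nat.
Hypothesis HR : (0 < R0)%nat.

Let F := Fq A B C.
Definition BB := (length S / R0 + 1)%nat.
Definition qa (t x : R) : nat := if Rle_dec 0 (A*x - C*t) then 0%nat else 1%nat.
Definition key (t t' : R) (p : R*R) : (nat*nat)*nat :=
  ((qa t (fst p), qa t' (snd p)),
   if Nat.eq_dec (qa t (fst p)) (qa t' (snd p)) then (blk S R0 (fst p) + blk S R0 (snd p))%nat
   else (blk S R0 (fst p) + (BB - 1 - blk S R0 (snd p)))%nat).
Definition gam (t t' : R) (p : R*R) : bool := Reqb (F (fst p) t) (F (snd p) t').
Definition cellb (p q : R*R) : bool :=
  Nat.eqb (blk S R0 (fst p)) (blk S R0 (fst q)) && Nat.eqb (blk S R0 (snd p)) (blk S R0 (snd q)).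
Definition SS := list_prod S S.
Definition Icnt (t t' : R) : nat := lsum (fun p => ind (gam t t' p)) SS.
Definition pairsC (t t' : R) : nat :=
  lsum (fun p => lsum (fun q => ind (gam t t' p && gam t t' q && negb (sb (pdec p q)) && cellb p q)) SS) SS.

Lemma AF x t : A * F x t = (A*x - C*t)^2 + (A*B - C^2)*t^2.
Proof. unfold F, Fq. ring. Qed.

Lemma qa_iff t x y : qa t x = qa t y -> (0 <= A*x - C*t <-> 0 <= A*y - C*t).
Proof. unfold qa. destruct (Rle_dec 0 (A*x - C*t)), (Rle_dec 0 (A*y - C*t)); intros E; try discriminate; tauto. Qed.
Lemma qa_eq_iff t t' x y : (qa t x = qa t' y) <-> (0 <= A*x - C*t <-> 0 <= A*y - C*t').
Proof. unfold qa. destruct (Rle_dec 0 (A*x - C*t)), (Rle_dec 0 (A*y - C*t')); split; intros E; try discriminate; try tauto; auto; exfalso; tauto. Qed.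

Lemma mono_curve t t' x x' y y' : F x t = F x' t' -> F y t = F y' t' -> x <= y ->
  qa t x = qa t y -> qa t' x' = qa t' y' ->
  (qa t x = qa t' x' -> x' <= y') /\ (qa t x <> qa t' x' -> y' <= x').
Proof.
  intros E1 E2 Hxy Q1 Q2.
  assert (E : (A*x - C*t)^2 - (A*x' - C*t')^2 = (A*y - C*t)^2 - (A*y' - C*t')^2).
  { pose proof (AF x t). pose proof (AF x' t'). pose proof (AF y t). pose proof (AF y' t').
    rewrite E1 in *. rewrite E2 in *. nra. }
  destruct (hyp_mono _ _ _ _ E ltac:(nra) (qa_iff _ _ _ Q1) (qa_iff _ _ _ Q2)) as [H1 H2].
  split; intros Hq.
  - apply qa_eq_iff in Hq. specialize (H1 Hq). nra.
  - assert (~ (0 <= A*x - C*t <-> 0 <= A*x' - C*t')) by (rewrite <- qa_eq_iff; auto).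
    specialize (H2 H). nra.
Qed.

Lemma gam_true t t' p : gam t t' p = true -> F (fst p) t = F (snd p) t'.
Proof. unfold gam, Reqb. apply sb_true. Qed.

Lemma samekey_cell t t' p q : In p SS -> In q SS -> gam t t' p = true -> gam t t' q = true ->
  key t t' p = key t t' q -> cellb p q = true.
Proof.
  destruct p as [x x'], q as [y y']. unfold SS. intros Hp Hq Gp Gq K.
  apply in_prod_iff in Hp as [Hx Hx']. apply in_prod_iff in Hq as [Hy Hy'].
  apply gam_true in Gp, Gq. simpl in *.
  unfold key in K. simpl in K. injection K as Q1 Q2 Sg.
  pose proof (blk_lt S R0 x HR Hx). pose proof (blk_lt S R0 x' HR Hx').
  pose proof (blk_lt S R0 y HR Hy). pose proof (blk_lt S R0 y' HR Hy').
  unfold cellb; simpl. apply andb_true_intro; split; apply Nat.eqb_eq; unfold BB in *.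
  - destruct (Rle_dec x y) as [Hxy|Hxy].
    + destruct (mono_curve t t' x x' y y' Gp Gq Hxy Q1 Q2) as [M1 M2].
      pose proof (blk_mono S R0 x y Hxy).
      destruct (Nat.eq_dec (qa t x) (qa t' x')) as [e|e];
      destruct (Nat.eq_dec (qa t y) (qa t' y')) as [e'|e']; try congruence.
      * pose proof (blk_mono S R0 _ _ (M1 e)). lia.
      * pose proof (blk_mono S R0 _ _ (M2 e)). lia.
    + assert (Hyx : y <= x) by lra.
      destruct (mono_curve t t' y y' x x' Gq Gp Hyx (eq_sym Q1) (eq_sym Q2)) as [M1 M2].
      pose proof (blk_mono S R0 y x Hyx).
      destruct (Nat.eq_dec (qa t x) (qa t' x')) as [e|e];
      destruct (Nat.eq_dec (qa t y) (qa t' y')) as [e'|e']; try congruence.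
      * pose proof (blk_mono S R0 _ _ (M1 e')). lia.
      * pose proof (blk_mono S R0 _ _ (M2 e')). lia.
  - destruct (Rle_dec x y) as [Hxy|Hxy].
    + destruct (mono_curve t t' x x' y y' Gp Gq Hxy Q1 Q2) as [M1 M2].
      pose proof (blk_mono S R0 x y Hxy).
      destruct (Nat.eq_dec (qa t x) (qa t' x')) as [e|e];
      destruct (Nat.eq_dec (qa t y) (qa t' y')) as [e'|e']; try congruence.
      * pose proof (blk_mono S R0 _ _ (M1 e)). lia.
      * pose proof (blk_mono S R0 _ _ (M2 e)). lia.
    + assert (Hyx : y <= x) by lra.
      destruct (mono_curve t t' y y' x x' Gq Gp Hyx (eq_sym Q1) (eq_sym Q2)) as [M1 M2].
      pose proof (blk_mono S R0 y x Hyx).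
      destruct (Nat.eq_dec (qa t x) (qa t' x')) as [e|e];
      destruct (Nat.eq_dec (qa t y) (qa t' y')) as [e'|e']; try congruence.
      * pose proof (blk_mono S R0 _ _ (M1 e')). lia.
      * pose proof (blk_mono S R0 _ _ (M2 e')). lia.
Qed.

Lemma ind_and a b : ind (a && b) = (ind a * ind b)%nat.
Proof. destruct a, b; reflexivity. Qed.

Lemma curve_bound t t' : (Icnt t t' <= 8 * BB + pairsC t t')%nat.
Proof.
  unfold Icnt. rewrite lsum_ind_filter.
  set (G := filter (gam t t') SS).
  set (Kall := list_prod (list_prod [0%nat;1%nat] [0%nat;1%nat]) (seq 0 (2*BB)%nat)).
  assert (HG : NoDup G) by (apply NoDup_filter; apply NoDup_prod; auto).
  assert (HK : forall x, In x G -> In (key t t' x) Kall).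
  { intros [x x'] Hx. apply filter_In in Hx as [Hx _]. unfold SS in Hx.
    apply in_prod_iff in Hx as [Hx Hx']. unfold key, Kall; cbn [fst snd].
    apply in_prod_iff; split.
    - apply in_prod_iff; split; unfold qa; destruct Rle_dec; simpl; auto.
    - apply in_seq. pose proof (blk_lt S R0 x HR Hx). pose proof (blk_lt S R0 x' HR Hx').
      unfold BB. destruct Nat.eq_dec; lia. }
  pose proof (key_bound pdec kdec (key t t') G Kall HG HK) as KB.
  assert (LK : length Kall = (8 * BB)%nat) by (unfold Kall; rewrite !length_prod, length_seq; simpl; lia).
  rewrite LK in KB. eapply Nat.le_trans; [apply KB|]. apply Nat.add_le_mono_l.
  unfold G, pairsC. rewrite lsum_filter. apply lsum_le. intros p Hp.
  rewrite lsum_filter. destruct (gam t t' p) eqn:Gp; simpl; [|lia].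
  rewrite Nat.add_0_r. apply lsum_le. intros q Hq.
  destruct (gam t t' q) eqn:Gq; simpl; [|lia].
  destruct (pdec p q); simpl; [lia|].
  unfold sb at 1. destruct (kdec (key t t' p) (key t t' q)) as [e|e]; simpl; [|lia].
  rewrite (samekey_cell t t' p q Hp Hq Gp Gq e). simpl. lia.
Qed.

Variable T : list R.
Hypothesis HT : NoDup T.

Definition degb (t t' : R) : bool := Reqb (t'*t') (t*t).

Lemma Icnt_le t t' : (Icnt t t' <= 2 * length S)%nat.
Proof.
  unfold Icnt, SS. rewrite lsum_prod. rewrite <- lsum_const.
  apply lsum_le. intros s _. apply count_le2; auto.
  intros a b c _ _ _ Ga Gb Gc Nab Nac Nbc.
  apply gam_true in Ga, Gb, Gc. simpl in *. unfold F, Fq in *.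
  apply (three_roots A (-2*C*t') (B*t'^2 - (A * s ^ 2 - 2 * C * s * t + B * t ^ 2)) a b c); auto; try lra.
Qed.

Lemma deg_le2 t : (lsum (fun t' => ind (degb t t')) T <= 2)%nat.
Proof.
  apply count_le2; auto. intros a b c _ _ _ Ga Gb Gc Nab Nac Nbc.
  cbv beta in Ga, Gb, Gc. unfold degb, Reqb in Ga, Gb, Gc. apply sb_true in Ga, Gb, Gc.
  apply (three_roots 1 0 (-(t*t)) a b c); auto; try lra.
Qed.

Lemma two_curves p q : p <> q ->
  (lsum (fun t => lsum (fun t' => ind (negb (degb t t') && gam t t' p && gam t t' q)) T) T <= 2)%nat.
Proof.
  intros Hpq.
  rewrite <- (lsum_prod (fun tt => ind (negb (degb (fst tt) (snd tt)) && gam (fst tt) (snd tt) p && gam (fst tt) (snd tt) q))).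
  apply count_le2; [apply NoDup_prod; auto|].
  intros [t1 t1'] [t2 t2'] [t3 t3'] _ _ _ G1 G2 G3 N12 N13 N23. simpl in *.
  apply andb_prop in G1 as [G1 G1q]. apply andb_prop in G1 as [D1 G1p].
  apply andb_prop in G2 as [G2 G2q]. apply andb_prop in G2 as [_ G2p].
  apply andb_prop in G3 as [G3 G3q]. apply andb_prop in G3 as [_ G3p].
  apply gam_true in G1p, G1q, G2p, G2q, G3p, G3q.
  destruct p as [x x'], q as [y y']. simpl in *.
  apply (two_curves_alg A B C x x' y y' t1 t1' t2 t2' t3 t3'); auto.
  unfold degb, Reqb, sb in D1. destruct (Req_EM_T (t1'*t1') (t1*t1)); simpl in D1; auto; discriminate.
Qed.

Lemma cell_count p : (lsum (fun q => ind (cellb p q)) SS <= R0 * R0)%nat.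
Proof.
  unfold SS, cellb. rewrite lsum_prod.
  eapply Nat.le_trans.
  2:{ apply Nat.mul_le_mono_r. apply (blk_count S R0 (blk S R0 (fst p)) HS HR). }
  rewrite Nat.mul_comm, <- lsum_mulc. apply lsum_le. intros a _. simpl.
  rewrite (lsum_ext _ (fun b => ind (Nat.eqb (blk S R0 a) (blk S R0 (fst p))) * ind (Nat.eqb (blk S R0 b) (blk S R0 (snd p))))%nat).
  2:{ intros b _. rewrite ind_and, (Nat.eqb_sym (blk S R0 (fst p))), (Nat.eqb_sym (blk S R0 (snd p))). auto. }
  rewrite lsum_mulc. pose proof (blk_count S R0 (blk S R0 (snd p)) HS HR). nia.
Qed.

Definition Qsum : nat := lsum (fun t => lsum (fun t' => Icnt t t') T) T.

Lemma Q_bound : (Qsum <= 4 * length S * length T + 8 * BB * (length T * length T)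
                 + 2 * (length S * length S * (R0 * R0)))%nat.
Proof.
  set (n := length S). set (m := length T).
  unfold Qsum.
  rewrite (lsum_ext _ (fun t => lsum (fun t' => ind (degb t t') * Icnt t t' + ind (negb (degb t t')) * Icnt t t') T)%nat).
  2:{ intros t _. apply lsum_ext. intros t' _. destruct (degb t t'); simpl; lia. }
  rewrite (lsum_ext _ (fun t => lsum (fun t' => ind (degb t t') * Icnt t t') T + lsum (fun t' => ind (negb (degb t t')) * Icnt t t') T)%nat).
  2:{ intros t _. apply lsum_plus. }
  rewrite lsum_plus.
  assert (P1 : (lsum (fun t => lsum (fun t' => ind (degb t t') * Icnt t t') T) T <= 4 * n * m)%nat).
  { transitivity (lsum (fun _ => 4 * n)%nat T); [|rewrite lsum_const; unfold m; lia].
    apply lsum_le. intros t _.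
    transitivity (lsum (fun t' => 2 * n * ind (degb t t'))%nat T).
    - apply lsum_le. intros t' _. pose proof (Icnt_le t t'). unfold n. destruct (degb t t'); simpl; lia.
    - rewrite lsum_mulc. pose proof (deg_le2 t). nia. }
  assert (P2 : (lsum (fun t => lsum (fun t' => ind (negb (degb t t')) * Icnt t t') T) T <=
     8 * BB * (m * m) + 2 * (n * n * (R0 * R0)))%nat).
  { transitivity (lsum (fun t => lsum (fun t' => 8 * BB + lsum (fun p => lsum (fun q =>
        ind (negb (degb t t') && gam t t' p && gam t t' q && negb (sb (pdec p q)) && cellb p q)) SS) SS) T) T)%nat.
    { apply lsum_le; intros t _; apply lsum_le; intros t' _.
      pose proof (curve_bound t t') as CB. unfold pairsC in CB.
      destruct (degb t t'); simpl.
      - lia.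
      - rewrite Nat.add_0_r. exact CB. }
    rewrite (lsum_ext _ (fun t => lsum (fun _ => 8 * BB) T + lsum (fun t' => lsum (fun p => lsum (fun q =>
        ind (negb (degb t t') && gam t t' p && gam t t' q && negb (sb (pdec p q)) && cellb p q)) SS) SS) T)%nat).
    2:{ intros t _. apply lsum_plus. }
    rewrite lsum_plus. rewrite (lsum_ext _ (fun _ => 8 * BB * m)%nat).
    2:{ intros; rewrite lsum_const; auto. }
    rewrite lsum_const. rewrite lsum_swap4.
    apply Nat.add_le_mono; [unfold m; nia|].
    transitivity (lsum (fun p => lsum (fun q => 2 * ind (cellb p q)) SS) SS)%nat.
    - apply lsum_le; intros p _; apply lsum_le; intros q _.
      destruct (pdec p q) as [e|e].
      + rewrite lsum_zero; [lia|]. intros t _. apply lsum_zero. intros t' _.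
        unfold sb; destruct (pdec p q); [|contradiction]. rewrite !andb_false_r. simpl. destruct (cellb p q); reflexivity.
      + destruct (cellb p q) eqn:Ec.
        * pose proof (two_curves p q e) as TC.
          eapply Nat.le_trans; [|simpl; apply Nat.le_refl].
          eapply Nat.le_trans; [|exact TC].
          apply lsum_le; intros t _; apply lsum_le; intros t' _.
          unfold sb; destruct (pdec p q); [contradiction|]. rewrite !andb_true_r. simpl. auto.
        * rewrite lsum_zero; [lia|]. intros t _. apply lsum_zero. intros t' _.
          rewrite !andb_false_r. reflexivity.
    - transitivity (lsum (fun p => 2 * (R0 * R0)) SS)%nat.
      + apply lsum_le; intros p _. rewrite lsum_mulc. pose proof (cell_count p). lia.
      + rewrite lsum_const. unfold SS. rewrite length_prod. unfold n. lia. }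
  lia.
Qed.

End Core.

Lemma nat_above x : exists N : nat, x < INR N.
Proof.
  destruct (archimed x) as [H _]. destruct (Z_le_gt_dec 0 (up x)) as [h|h].
  - exists (Z.to_nat (up x)). rewrite INR_IZR_INZ, Z2Nat.id; auto.
  - exists 0%nat. simpl. apply Z.gt_lt in h. apply IZR_lt in h. lra.
Qed.

Definition sig (a d p : point) : R :=
  ((fst p - fst a) * fst d + (snd p - snd a) * snd d) / (fst d ^ 2 + snd d ^ 2).

Lemma norm_pos (d : point) : d <> (0, 0) -> 0 < fst d ^ 2 + snd d ^ 2.
Proof. destruct d as [x y]; simpl; intros H.
  destruct (Req_EM_T x 0), (Req_EM_T y 0); subst; [exfalso; auto| | |]; nra. Qed.

Lemma on_line_sig a d p : d <> (0,0) -> on_line a d p ->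
  p = (fst a + sig a d p * fst d, snd a + sig a d p * snd d).
Proof.
  intros Hd [s ->]. pose proof (norm_pos d Hd).
  assert (E : sig a d (fst a + s * fst d, snd a + s * snd d) = s).
  { unfold sig; simpl. field. lra. }
  rewrite E. reflexivity.
Qed.

Lemma dist_formula a1 d1 a2 d2 s0 t0 s t :
  fst a1 + s0 * fst d1 = fst a2 + t0 * fst d2 ->
  snd a1 + s0 * snd d1 = snd a2 + t0 * snd d2 ->
  dist2 (fst a1 + s * fst d1, snd a1 + s * snd d1) (fst a2 + t * fst d2, snd a2 + t * snd d2) =
  sqrt (Fq (fst d1 ^ 2 + snd d1 ^ 2) (fst d2 ^ 2 + snd d2 ^ 2) (fst d1 * fst d2 + snd d1 * snd d2) (s - s0) (t - t0))
  /\ 0 <= Fq (fst d1 ^ 2 + snd d1 ^ 2) (fst d2 ^ 2 + snd d2 ^ 2) (fst d1 * fst d2 + snd d1 * snd d2) (s - s0) (t - t0).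
Proof.
  intros E1 E2. unfold dist2, Fq; cbn [fst snd].
  assert (F1 : fst a2 = fst a1 + s0 * fst d1 - t0 * fst d2) by lra.
  assert (F2 : snd a2 = snd a1 + s0 * snd d1 - t0 * snd d2) by lra.
  rewrite F1, F2. split.
  - f_equal. ring.
  - replace ((fst d1 ^ 2 + snd d1 ^ 2) * (s - s0) ^ 2 -
     2 * (fst d1 * fst d2 + snd d1 * snd d2) * (s - s0) * (t - t0) +
     (fst d2 ^ 2 + snd d2 ^ 2) * (t - t0) ^ 2) with
     (((s - s0) * fst d1 - (t - t0) * fst d2)^2 + ((s - s0) * snd d1 - (t - t0) * snd d2)^2) by ring.
    apply Rplus_le_le_0_compat; apply pow2_ge_0.
Qed.

Lemma Qsum_expand A B C S T :
  Qsum A B C S T = lsum (fun t => lsum (fun t' => lsum (fun s => lsum (fun s' =>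
     ind (Reqb (Fq A B C s t) (Fq A B C s' t'))) S) S) T) T.
Proof.
  unfold Qsum. apply lsum_ext; intros t _; apply lsum_ext; intros t' _.
  unfold Icnt, SS. rewrite lsum_prod. reflexivity.
Qed.

Lemma energy_transfer (A B C : R) (P1 P2 : list point) (sg tu : point -> R) :
  (forall p q p' q', In p P1 -> In q P2 -> In p' P1 -> In q' P2 -> dist2 p q = dist2 p' q' ->
     Fq A B C (sg p) (tu q) = Fq A B C (sg p') (tu q')) ->
  (lsum (fun y => cnt y (flat_map (fun p => map (dist2 p) P2) P1)) (flat_map (fun p => map (dist2 p) P2) P1)
     <= Qsum A B C (map sg P1) (map tu P2))%nat.
Proof.
  intros H. set (L := flat_map (fun p => map (dist2 p) P2) P1).
  unfold cnt. rewrite Qsum_expand.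
  transitivity (lsum (fun p => lsum (fun q => lsum (fun p' => lsum (fun q' =>
     ind (Reqb (dist2 p q) (dist2 p' q'))) P2) P1) P2) P1).
  { unfold L. rewrite lsum_flat_map. apply Nat.eq_le_incl. apply lsum_ext; intros p _.
    rewrite lsum_map. apply lsum_ext; intros q _. rewrite lsum_flat_map.
    apply lsum_ext; intros p' _. rewrite lsum_map. reflexivity. }
  transitivity (lsum (fun p => lsum (fun q => lsum (fun p' => lsum (fun q' =>
     ind (Reqb (Fq A B C (sg p) (tu q)) (Fq A B C (sg p') (tu q')))) P2) P1) P2) P1).
  { apply lsum_le; intros p Hp; apply lsum_le; intros q Hq; apply lsum_le; intros p' Hp';
    apply lsum_le; intros q' Hq'. unfold Reqb, sb.
    destruct (Req_EM_T (dist2 p q) (dist2 p' q')) as [e|e]; simpl; [|lia].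
    rewrite (H p q p' q' Hp Hq Hp' Hq' e). destruct Req_EM_T; simpl; [lia|congruence]. }
  apply Nat.eq_le_incl.
  rewrite !lsum_map.
  transitivity (lsum (fun p => lsum (fun p' => lsum (fun q => lsum (fun q' =>
     ind (Reqb (Fq A B C (sg p) (tu q)) (Fq A B C (sg p') (tu q')))) P2) P2) P1) P1).
  { apply lsum_ext; intros p _. rewrite lsum_swap. reflexivity. }
  rewrite (lsum_swap4 (fun p p' q q' => ind (Reqb (Fq A B C (sg p) (tu q)) (Fq A B C (sg p') (tu q'))))).
  apply lsum_ext; intros q _. rewrite lsum_map. apply lsum_ext; intros q' _. rewrite lsum_map.
  apply lsum_ext; intros p _. rewrite lsum_map. reflexivity.
Qed.

Lemma rpow_part n m eps K : 0 < eps -> 1 <= K -> Rpower K (1/(2*eps)) <= n -> 1 <= n ->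
  Rpower n (1/2 + eps) <= m -> n * K <= m^2.
Proof.
  intros He HK Hn Hn1 Hm.
  assert (Hp : 0 < Rpower n (1/2+eps)) by (unfold Rpower; apply exp_pos).
  assert (E : Rpower n (1/2+eps) * Rpower n (1/2+eps) = n * Rpower n (2*eps)).
  { rewrite <- Rpower_plus. replace (1/2 + eps + (1/2 + eps)) with (1 + 2*eps) by field.
    rewrite Rpower_plus, Rpower_1; lra. }
  assert (HK2 : K <= Rpower n (2*eps)).
  { assert (Hq : 0 < Rpower K (1/(2*eps))) by (unfold Rpower; apply exp_pos).
    pose proof (Rle_Rpower_l (Rpower K (1/(2*eps))) n (2*eps) ltac:(lra) (conj Hq Hn)) as H.
    rewrite Rpower_mult in H. replace (1/(2*eps) * (2*eps)) with 1 in H by (field; lra).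
    rewrite Rpower_1 in H; lra. }
  assert (m^2 >= Rpower n (1/2+eps) * Rpower n (1/2+eps)) by nra.
  nra.
Qed.

Lemma numeric c n m r N q : 0 < c -> 32*c <= r -> 64*c <= n -> 64*c <= m -> 32*c*r^2*n <= m^2 ->
  0 <= N -> N < c*n -> 0 <= q -> q * r <= n ->
  (n*m)*(n*m) <= N * (4*n*m + 8*(q+1)*(m*m) + 2*(n*n*(r*r))) -> False.
Proof.
  intros Hc Hr Hn Hm Hmm HN HNc Hq Hqr H.
  assert (Hr0 : 0 < r) by lra. assert (Hn0 : 0 < n) by lra. assert (Hm0 : 0 < m) by lra.
  set (Qb := 4*n*m + 8*(q+1)*(m*m) + 2*(n*n*(r*r))) in *.
  assert (T1 : c * (4*n*m) <= n*m*m/16).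
  { assert (64*c*m <= m*m) by (apply Rmult_le_compat_r; lra).
    assert (n*(64*c*m) <= n*(m*m)) by (apply Rmult_le_compat_l; lra). lra. }
  assert (T2 : c * q <= n / 32).
  { assert (c*q <= r/32*q) by (apply Rmult_le_compat_r; lra). lra. }
  assert (T3 : c * (8*q*(m*m)) <= n*m*m/4).
  { assert (0 <= m*m) by nra. nra. }
  assert (T4 : c * (8*(m*m)) <= n*m*m/8).
  { assert (0 <= m*m) by nra. nra. }
  assert (T5 : c * (2*(n*n*(r*r))) <= n*m*m/16).
  { replace (c * (2*(n*n*(r*r)))) with (2*n/32 * (32*c*r^2*n)) by field.
    assert (2*n/32 * (32*c*r^2*n) <= 2*n/32 * m^2) by (apply Rmult_le_compat_l; lra).
    lra. }
  assert (TQ : c * Qb <= n*m*m/2) by (unfold Qb; nra).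
  assert (Qpos : 0 < Qb) by (unfold Qb; nra).
  assert (N * Qb < c*n*Qb) by (apply Rmult_lt_compat_r; auto).
  assert (c*n*Qb <= n * (n*m*m/2)) by nra.
  assert (0 < n*m*(n*m)) by (apply Rmult_lt_0_compat; nra).
  nra.
Qed.

Theorem theorem5p2 :
  forall c eps : R, 0 < c -> 0 < eps ->
  exists n0 : nat, forall n : nat, (n > n0)%nat ->
  forall (a1 d1 a2 d2 : point), d1 <> (0, 0) -> d2 <> (0, 0) ->
  forall P1 P2 : list point,
    NoDup P1 -> length P1 = n -> (forall p, In p P1 -> on_line a1 d1 p) ->
    NoDup P2 -> INR (length P2) >= Rpower (INR n) (1/2 + eps) ->
    (forall p, In p P2 -> on_line a2 d2 p) ->
    INR (length (distset P1 P2)) < c * INR n ->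
    parallel d1 d2 \/ orthogonal d1 d2.
Proof.
  intros c eps Hc He.
  destruct (nat_above (32 * c)) as [R0 HR0].
  assert (HR0p : (0 < R0)%nat) by (destruct R0; simpl in HR0; [lra|lia]).
  set (r := INR R0) in *.
  set (K1 := 32 * c * r^2 + 1).
  assert (HK1 : 1 <= K1) by (unfold K1; assert (0 <= r^2) by apply pow2_ge_0; nra).
  set (Nb := Rmax (Rmax (64*c) ((64*c)^2)) (Rmax (Rpower K1 (1/(2*eps))) 1)).
  destruct (nat_above Nb) as [n0 Hn0].
  exists n0. intros n Hn a1 d1 a2 d2 Hd1 Hd2 P1 P2 ND1 Hlen H1 ND2 Hm H2 HD.
  assert (HnR : Nb < INR n) by (apply lt_INR in Hn; lra).
  assert (Hb1 : 64 * c <= INR n) by (unfold Nb in HnR; pose proof (Rmax_l (64*c) ((64*c)^2));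
    pose proof (Rmax_l (Rmax (64*c) ((64*c)^2)) (Rmax (Rpower K1 (1/(2*eps))) 1)); lra).
  assert (Hb2 : (64 * c)^2 <= INR n) by (unfold Nb in HnR; pose proof (Rmax_r (64*c) ((64*c)^2));
    pose proof (Rmax_l (Rmax (64*c) ((64*c)^2)) (Rmax (Rpower K1 (1/(2*eps))) 1)); lra).
  assert (Hb3 : Rpower K1 (1/(2*eps)) <= INR n) by (unfold Nb in HnR; pose proof (Rmax_l (Rpower K1 (1/(2*eps))) 1);
    pose proof (Rmax_r (Rmax (64*c) ((64*c)^2)) (Rmax (Rpower K1 (1/(2*eps))) 1)); lra).
  assert (Hb4 : 1 <= INR n) by (unfold Nb in HnR; pose proof (Rmax_r (Rpower K1 (1/(2*eps))) 1);
    pose proof (Rmax_r (Rmax (64*c) ((64*c)^2)) (Rmax (Rpower K1 (1/(2*eps))) 1)); lra).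
  unfold parallel, orthogonal.
  destruct (Req_EM_T (fst d1 * snd d2 - snd d1 * fst d2) 0) as [Hpar|Hpar]; [left; auto|].
  destruct (Req_EM_T (fst d1 * fst d2 + snd d1 * snd d2) 0) as [Hort|Hort]; [right; auto|].
  exfalso.
  set (A := fst d1 ^ 2 + snd d1 ^ 2).
  set (B := fst d2 ^ 2 + snd d2 ^ 2).
  set (C := fst d1 * fst d2 + snd d1 * snd d2).
  assert (HA : 0 < A) by (apply norm_pos; auto).
  assert (HB : 0 < B) by (apply norm_pos; auto).
  assert (HDD : 0 < A * B - C^2).
  { replace (A * B - C^2) with ((fst d1 * snd d2 - snd d1 * fst d2)^2) by (unfold A, B, C; ring).
    pose proof (Rsqr_pos_lt _ Hpar) as Hs; unfold Rsqr in Hs; nra. }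
  set (det := fst d1 * snd d2 - snd d1 * fst d2) in *.
  set (wx := fst a2 - fst a1). set (wy := snd a2 - snd a1).
  set (s0 := (wx * snd d2 - wy * fst d2) / det).
  set (t0 := (snd d1 * wx - fst d1 * wy) / det).
  assert (E1 : fst a1 + s0 * fst d1 = fst a2 + t0 * fst d2) by (unfold s0, t0, wx, wy, det in *; field; auto).
  assert (E2 : snd a1 + s0 * snd d1 = snd a2 + t0 * snd d2) by (unfold s0, t0, wx, wy, det in *; field; auto).
  set (sg := fun p => sig a1 d1 p - s0). set (tu := fun q => sig a2 d2 q - t0).
  assert (Hdist : forall p q, In p P1 -> In q P2 ->
            dist2 p q = sqrt (Fq A B C (sg p) (tu q)) /\ 0 <= Fq A B C (sg p) (tu q)).
  { intros p q Hp Hq. rewrite (on_line_sig a1 d1 p Hd1 (H1 p Hp)) at 1.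
    rewrite (on_line_sig a2 d2 q Hd2 (H2 q Hq)) at 1. apply dist_formula; auto. }
  assert (ET := energy_transfer A B C P1 P2 sg tu).
  assert (ET' : (lsum (fun y => cnt y (flat_map (fun p => map (dist2 p) P2) P1))
        (flat_map (fun p => map (dist2 p) P2) P1) <= Qsum A B C (map sg P1) (map tu P2))%nat).
  { apply ET. intros p q p' q' Hp Hq Hp' Hq' Eq.
    destruct (Hdist p q Hp Hq) as [D1 F1]. destruct (Hdist p' q' Hp' Hq') as [D2 F2].
    apply sqrt_inj; auto. congruence. }
  clear ET.
  assert (NDS : NoDup (map sg P1)).
  { apply NoDup_map_NoDup_ForallPairs; auto. intros p p' Hp Hp' E.
    rewrite (on_line_sig a1 d1 p Hd1 (H1 p Hp)), (on_line_sig a1 d1 p' Hd1 (H1 p' Hp')).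
    unfold sg in E. assert (sig a1 d1 p = sig a1 d1 p') by lra. rewrite H. reflexivity. }
  assert (NDT : NoDup (map tu P2)).
  { apply NoDup_map_NoDup_ForallPairs; auto. intros p p' Hp Hp' E.
    rewrite (on_line_sig a2 d2 p Hd2 (H2 p Hp)), (on_line_sig a2 d2 p' Hd2 (H2 p' Hp')).
    unfold tu in E. assert (sig a2 d2 p = sig a2 d2 p') by lra. rewrite H. reflexivity. }
  pose proof (Q_bound A B C HA HB Hort HDD (map sg P1) NDS R0 HR0p (map tu P2) NDT) as QB.
  set (L := flat_map (fun p => map (dist2 p) P2) P1) in *.
  pose proof (cs_distinct L) as CS.
  assert (LL : length L = (n * length P2)%nat).
  { rewrite <- (Nat.mul_1_l (length L)), <- lsum_const. unfold L. rewrite lsum_flat_map.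
    rewrite (lsum_ext _ (fun _ => 1 * length P2)%nat).
    - rewrite lsum_const. lia.
    - intros p _. rewrite lsum_map, lsum_const. reflexivity. }
  unfold BB in QB. rewrite !length_map in QB. rewrite Hlen in QB.
  set (m := length P2) in *.
  set (N := length (distset P1 P2)) in *.
  assert (HN : N = length (nodup Req_EM_T L)) by reflexivity.
  rewrite <- HN, LL in CS.
  assert (Hnat : (n * m * (n * m) <= N * (4 * n * m + 8 * (n / R0 + 1) * (m * m) + 2 * (n * n * (R0 * R0))))%nat).
  { eapply Nat.le_trans; [apply CS|]. apply Nat.mul_le_mono_l. lia. }
  apply le_INR in Hnat. repeat (rewrite mult_INR in Hnat || rewrite plus_INR in Hnat).
  assert (Hq : INR (n / R0) * r <= INR n).
  { unfold r. rewrite <- mult_INR. apply le_INR. rewrite Nat.mul_comm. apply Nat.Div0.mul_div_le. }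
  assert (HmR : INR n * K1 <= INR m ^ 2) by (apply (rpow_part (INR n) (INR m) eps K1); auto; lra).
  assert (Hm64 : 64 * c <= INR m).
  { assert (INR n <= INR m ^ 2) by nra. pose proof (pos_INR m). nra. }
  assert (Hmm : 32 * c * r ^ 2 * INR n <= INR m ^ 2) by (unfold K1 in HmR; nra).
  assert (Hnat' : INR n * INR m * (INR n * INR m) <= INR N * (4 * INR n * INR m + 8 * (INR (n / R0) + 1) * (INR m * INR m) + 2 * (INR n * INR n * (r * r)))).
  { replace 4 with (INR 4) by (simpl; lra). replace 8 with (INR 8) by (simpl; lra).
    replace 2 with (INR 2) by (simpl; lra). replace 1 with (INR 1) by (simpl; lra). exact Hnat. }
  apply (numeric c (INR n) (INR m) r (INR N) (INR (n / R0))); try lra; try apply pos_INR; auto.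
Qed.
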